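(* Let $(X,d)$ be a complete metric space and let $\{f_{\eta_k}:\eta_k\in B^{[k]},\,k\in\mathbb{N}\}$ be a binary tree of continuous maps $f_{\eta_k}:X\to X$. Fix an infinite code $\eta\in B^{[\infty]}$ and consider the sequence of maps $\{f_{\tau_k\eta}\}_{k\in\mathbb{N}}$ along the path $P_\eta$. Assume there is a nonempty compact set $C_{P_\eta}\subseteq X$ with $f_{\tau_k\eta}(C_{P_\eta})\subseteq C_{P_\eta}$ for all $k\in\mathbb{N}$, and that each $f_{\tau_k\eta}$ is Lipschitz with Lipschitz constant $s_{\tau_k\eta}$. If $$\sum_{k=1}^\infty\prod_{i=1}^k s_{\tau_i\eta}<\infty,$$ then for every $x\in C_{P_\eta}$ the limit $$\gamma(\eta):=\lim_{k\to\infty} f_{\tau_1\eta}\circ f_{\tau_2\eta}\circ\cdots\circ f_{\tau_k\eta}(x)$$ exists, and it is the same element of $C_{P_\eta}$ for all $x\in C_{P_\eta}$.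
   Context: $B^{[k]}=\{1,2\}^k$ is the set of binary codes $\eta_k=(i_1i_2\ldots i_k)$ of length $k$, and $B^{[\infty]}=\{1,2\}^{\mathbb{N}}$ the set of infinite codes $\eta=(i_1i_2\ldots)$. For $\eta\in B^{[\infty]}$ (or a finite code of length $>\ell$), the truncation $\tau_\ell\eta=(i_1\ldots i_\ell)\in B^{[\ell]}$. A binary tree of maps assigns to each finite code $\eta_k$ (all $k\ge 1$) a continuous map $f_{\eta_k}:X\to X$. The path $P_\eta$ determined by $\eta$ is the sequence of codes $(\tau_1\eta,\tau_2\eta,\ldots)$. For $f:X\to X$, $\mathrm{Lip}(f)=\sup_{x\neq y}d(f(x),f(y))/d(x,y)$. *)

(* Defs.v *)
From Stdlib Require Import Reals List.
Open Scope R_scope.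

Definition is_metric {X : Type} (d : X -> X -> R) : Prop :=
  (forall x y, 0 <= d x y) /\
  (forall x y, d x y = 0 <-> x = y) /\
  (forall x y, d x y = d y x) /\
  (forall x y z, d x z <= d x y + d y z).

Definition converges_to {X : Type} (d : X -> X -> R) (u : nat -> X) (l : X) : Prop :=
  forall eps, eps > 0 -> exists N : nat, forall n, (n >= N)%nat -> d (u n) l < eps.

Definition cauchy_seq {X : Type} (d : X -> X -> R) (u : nat -> X) : Prop :=
  forall eps, eps > 0 -> exists N : nat,
    forall m n, (m >= N)%nat -> (n >= N)%nat -> d (u m) (u n) < eps.

Definition complete_metric {X : Type} (d : X -> X -> R) : Prop :=
  forall u : nat -> X, cauchy_seq d u -> exists l, converges_to d u l.

Definition continuous_map {X : Type} (d : X -> X -> R) (g : X -> X) : Prop :=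
  forall x eps, eps > 0 -> exists delta, delta > 0 /\
    forall y, d x y < delta -> d (g x) (g y) < eps.

Definition open_set {X : Type} (d : X -> X -> R) (U : X -> Prop) : Prop :=
  forall x, U x -> exists r, r > 0 /\ forall y, d x y < r -> U y.

Definition compact_set {X : Type} (d : X -> X -> R) (C : X -> Prop) : Prop :=
  forall (I : Type) (U : I -> X -> Prop),
    (forall i, open_set d (U i)) ->
    (forall x, C x -> exists i, U i x) ->
    exists l : list I, forall x, C x -> exists i, In i l /\ U i x.

(* Finite binary codes are lists of booleans (false ~ 1, true ~ 2);
   infinite codes are functions nat -> bool; tau k eta = (i_1 ... i_k). *)
Definition tau (k : nat) (eta : nat -> bool) : list bool := map eta (seq 0 k).

(* tree_comp f eta k x = f_{tau_1 eta} o ... o f_{tau_k eta} (x). *)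
Fixpoint tree_comp {X : Type} (f : list bool -> X -> X) (eta : nat -> bool)
    (k : nat) (x : X) : X :=
  match k with
  | O => x
  | S k' => tree_comp f eta k' (f (tau (S k') eta) x)
  end.

Fixpoint prod_s (s : list bool -> R) (eta : nat -> bool) (k : nat) : R :=
  match k with
  | O => 1
  | S k' => prod_s s eta k' * s (tau (S k') eta)
  end.

(* Main.v *)
Require Import Defs.
From Stdlib Require Import Reals List Lra Lia Psatz Classical.
Open Scope R_scope.

Lemma list_max_R (l : list R) : exists M, forall r, In r l -> r <= M.
Proof.
  induction l as [|a l [M HM]].
  - exists 0. intros r [].
  - exists (Rmax a M). intros r [<-|H].
    + apply Rmax_l.
    + eapply Rle_trans; [apply HM; auto| apply Rmax_r].
Qed.

Lemma list_min_pos (l : list R) : exists m, 0 < m /\ forall r, In r l -> 0 < r -> m <= r.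
Proof.
  induction l as [|a l [m [Hm HM]]].
  - exists 1. split; [lra|]. intros r [].
  - destruct (Rlt_dec 0 a) as [Ha|Ha].
    + exists (Rmin a m). split. { apply Rmin_pos; auto. }
      intros r [<-|H] Hr. apply Rmin_l. eapply Rle_trans; [apply Rmin_r| apply HM; auto].
    + exists m. split; auto. intros r [<-|H] Hr. lra. auto.
Qed.

Theorem mainTheorem1 (X : Type) (d : X -> X -> R)
  (Hmet : is_metric d) (Hcomplete : complete_metric d)
  (f : list bool -> X -> X)
  (Hcont : forall c : list bool, (length c >= 1)%nat -> continuous_map d (f c))
  (eta : nat -> bool) (C : X -> Prop)
  (HCne : exists x, C x) (HCcpt : compact_set d C)
  (HCinv : forall k, (k >= 1)%nat -> forall x, C x -> C (f (tau k eta) x))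
  (s : list bool -> R)
  (Hs_nonneg : forall k, (k >= 1)%nat -> 0 <= s (tau k eta))
  (Hlip : forall k, (k >= 1)%nat -> forall x y,
            d (f (tau k eta) x) (f (tau k eta) y) <= s (tau k eta) * d x y)
  (Hsum : exists L, Un_cv (fun n => sum_f_R0 (fun k => prod_s s eta (S k)) n) L) :
  exists g : X, C g /\
    forall x, C x -> converges_to d (fun k => tree_comp f eta k x) g.
Proof.
  destruct Hmet as [Hpos [Hid [Hsym Htri]]].
  set (T := fun k x => tree_comp f eta k x).
  set (P := prod_s s eta).
  assert (HP0: forall k, 0 <= P k).
  { induction k; unfold P; simpl. lra. apply Rmult_le_pos; auto. apply Hs_nonneg; lia. }
  assert (HTlip: forall k x y, d (T k x) (T k y) <= P k * d x y).
  { induction k; intros x y.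
    - unfold T, P; simpl. lra.
    - change (T (S k) x) with (T k (f (tau (S k) eta) x)).
      change (T (S k) y) with (T k (f (tau (S k) eta) y)).
      eapply Rle_trans. apply IHk.
      change (P (S k)) with (P k * s (tau (S k) eta)).
      rewrite Rmult_assoc. apply Rmult_le_compat_l; auto. apply Hlip; lia. }
  assert (HTC: forall k x, C x -> C (T k x)).
  { induction k; intros x Hx. exact Hx.
    change (T (S k) x) with (T k (f (tau (S k) eta) x)). apply IHk, HCinv; auto; lia. }
  destruct HCne as [x0 Hx0].
  assert (HB: exists M, forall y, C y -> d x0 y < M).
  { destruct (HCcpt R (fun r y => d x0 y < r)) as [l Hl].
    - intros r y Hy. exists (r - d x0 y). split; [lra|]. intros z Hz.
      pose proof (Htri x0 y z). lra.
    - intros y _. exists (d x0 y + 1). lra.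
    - destruct (list_max_R l) as [M HM]. exists M. intros y Hy.
      destruct (Hl y Hy) as [r [Hr1 Hr2]]. specialize (HM r Hr1). lra. }
  destruct HB as [M HM].
  set (D := 2 * M).
  assert (HD0 : 0 <= D).
  { pose proof (HM x0 Hx0). pose proof (Hpos x0 x0). unfold D. lra. }
  assert (HD: forall y z, C y -> C z -> d y z <= D).
  { intros y z Hy Hz. pose proof (Htri y x0 z). rewrite (Hsym y x0) in H.
    pose proof (HM y Hy). pose proof (HM z Hz). unfold D. lra. }
  assert (Hstep: forall k x, C x -> d (T k x) (T (S k) x) <= P k * D).
  { intros k x Hx. change (T (S k) x) with (T k (f (tau (S k) eta) x)).
    eapply Rle_trans. apply HTlip. apply Rmult_le_compat_l; auto.
    apply HD; auto. apply HCinv; auto; lia. }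
  set (Q := fun n => sum_f_R0 (fun k => P (S k)) n).
  assert (Hchain: forall m j x, C x ->
     d (T (S (S m)) x) (T (S (S m) + j)%nat x) <= D * (Q (m + j)%nat - Q m)).
  { intros m j x Hx. induction j.
    - rewrite !Nat.add_0_r. rewrite (proj2 (Hid _ _) eq_refl). lra.
    - replace (S (S m) + S j)%nat with (S (S (S m) + j)) by lia.
      replace (m + S j)%nat with (S (m + j)) by lia.
      change (Q (S (m + j))) with (Q (m + j)%nat + P (S (S (m + j)))).
      pose proof (Hstep (S (S m) + j)%nat x Hx) as Hs.
      replace (S (S m) + j)%nat with (S (S (m + j))) in Hs, IHj |- * by lia.
      eapply Rle_trans; [apply Htri with (y := T (S (S (m + j))) x)|].
      nra. }
  destruct Hsum as [L HL].
  assert (HQc : Cauchy_crit Q) by (apply CV_Cauchy; exists L; exact HL).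
  assert (HTcauchy: forall x, C x -> cauchy_seq d (fun k => T k x)).
  { intros x Hx eps He.
    set (e' := eps / (D + 1)).
    assert (He' : 0 < e') by (unfold e'; apply Rdiv_lt_0_compat; lra).
    assert (He'2 : e' * (D + 1) = eps) by (unfold e'; field; lra).
    destruct (HQc e' He') as [N HN].
    assert (Hk: forall a b, (a >= N)%nat -> (b >= a)%nat ->
               d (T (S (S a)) x) (T (S (S b)) x) < eps).
    { intros a b Ha Hb. replace (S (S b)) with (S (S a) + (b - a))%nat by lia.
      eapply Rle_lt_trans. apply Hchain; auto.
      specialize (HN (a + (b - a))%nat a ltac:(lia) ltac:(lia)). unfold R_dist in HN.
      pose proof (Rle_abs (Q (a + (b - a))%nat - Q a)). nra. }
    exists (S (S N)). intros m n Hm Hn.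
    destruct m as [|[|m]]; [lia|lia|]. destruct n as [|[|n]]; [lia|lia|].
    destruct (Nat.le_gt_cases m n).
    - apply Hk; lia.
    - rewrite Hsym. apply Hk; lia. }
  destruct (Hcomplete _ (HTcauchy x0 Hx0)) as [g Hg].
  assert (HP: forall eps, eps > 0 -> exists N, forall k, (k >= N)%nat -> P k < eps).
  { intros eps He. destruct (HQc eps He) as [N HN]. exists (S (S N)). intros k Hk.
    destruct k as [|[|k]]; [lia|lia|].
    specialize (HN (S k) k ltac:(lia) ltac:(lia)). unfold R_dist in HN.
    change (Q (S k)) with (Q k + P (S (S k))) in HN.
    replace (Q k + P (S (S k)) - Q k) with (P (S (S k))) in HN by ring.
    pose proof (Rle_abs (P (S (S k)))). lra. }
  exists g. split.
  - destruct (classic (C g)) as [Hc|Hn]; auto. exfalso.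
    destruct (HCcpt R (fun r y => 0 < r /\ r < d g y)) as [l Hl].
    + intros r y [H1 H2]. exists (d g y - r). split; [lra|]. intros z Hz.
      split; auto. pose proof (Htri g z y). rewrite (Hsym z y) in H. lra.
    + intros y Hy. exists (d g y / 2).
      assert (d g y <> 0). { intro E. apply (proj1 (Hid _ _)) in E. subst. auto. }
      pose proof (Hpos g y). lra.
    + destruct (list_min_pos l) as [m [Hm0 Hm]].
      destruct (Hg m Hm0) as [N HN]. specialize (HN N (le_n _)). cbv beta in HN.
      destruct (Hl _ (HTC N x0 Hx0)) as [r [Hr [Hr1 Hr2]]].
      specialize (Hm r Hr Hr1). rewrite Hsym in Hr2. unfold T in *. lra.
  - intros x Hx eps He.
    set (e1 := eps / (2 * (D + 1))).
    assert (He1 : 0 < e1) by (unfold e1; apply Rdiv_lt_0_compat; lra).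
    assert (He12 : e1 * (2 * (D + 1)) = eps) by (unfold e1; field; lra).
    destruct (HP e1 He1) as [N1 HN1].
    destruct (Hg (eps / 2) ltac:(lra)) as [N2 HN2].
    exists (Nat.max N1 N2). intros k Hk.
    specialize (HN1 k ltac:(lia)). specialize (HN2 k ltac:(lia)). cbv beta in HN2 |- *.
    pose proof (Htri (tree_comp f eta k x) (tree_comp f eta k x0) g).
    pose proof (HTlip k x x0). pose proof (HD x x0 Hx Hx0). unfold T in *.
    pose proof (HP0 k). nra.
Qed.
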